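(* $\mathcal{L}_{\mathsf{SAFA}}\subsetneq\mathcal{L}_{\mathsf{CMA}}$: every data language accepted by a SAFA is accepted by some class memory automaton, and some data language accepted by a class memory automaton is accepted by no SAFA.
   Context: $D$ is a fixed countably infinite set of data values; for a finite alphabet $\Sigma$, data languages are subsets of $(\Sigma\times D)^*$. A set augmented finite automaton (SAFA) is a tuple $M=(Q,\Sigma\times D,q_0,F,H,\delta)$: $Q$ finite set of states, $q_0\in Q$ initial, $F\subseteq Q$ final, $H=\{h_1,\dots,h_m\}$ a finite collection of (names of) sets of data values, $\delta\subseteq Q\times\Sigma\times C\times OP\times Q$ with $C=\{p(h_i),\,!p(h_i)\}$, $OP=\{-\}\cup\{\mathsf{ins}(h_i)\}$. Configurations are $(q,\langle S_1,\dots,S_m\rangle)$, $S_i\subseteq D$ finite; initially state $q_0$ and all sets empty. On reading $(a,d)$, a transition $(q,a,\alpha,op,q')$ from the current state may be taken if $\alpha=p(h_i)$ and $d\in S_i$, or $\alpha=\,!p(h_i)$ and $d\notin S_i$; then the state becomes $q'$ and if $op=\mathsf{ins}(h_j)$, $d$ is added to $S_j$. A word is accepted if some run reads it entirely and ends in $F$; $\mathcal{L}_{\mathsf{SAFA}}$ is the class of languages accepted by SAFA. A class memory automaton (CMA) is a tuple $(Q,\Sigma,\delta,q_0,F_\ell,F_g)$ with finite state set $Q$, initial state $q_0$, accepting sets $F_g\subseteq F_\ell\subseteq Q$, and $\delta\subseteq Q\times\Sigma\times(Q\cup\{\bot\})\times Q$. The automaton records for each data value $d$ the state $f(d)$ it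 entered the last time it read a position carrying $d$ ($f(d)=\bot$ if $d$ has not been read). On reading $(a,d)$ in state $q$ it may take a transition $(q,a,f(d),q')\in\delta$, after which the state is $q'$ and $f(d):=q'$. A word is accepted if some run reads it entirely, ends in a state of $F_g$, and $f(d)\in F_\ell$ for every data value $d$ occurring in the word. $\mathcal{L}_{\mathsf{CMA}}$ is the class of languages accepted by CMA. *)

(* Defs.v *)
From mathcomp Require Import all_boot.
Set Implicit Arguments. Unset Strict Implicit. Unset Printing Implicit Defensive.

Definition dword (Sigma : finType) := seq (Sigma * nat).

(* Sets h_1..h_m are indexed by 'I_m.
   A condition (b, i) : bool * 'I_m stands for p(h_i) if b = true and
   !p(h_i) if b = false.  An operation None stands for '-', Some j for ins(h_j). *)
Record SAFA (Sigma : finType) := {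
  sQ : finType;
  sm : nat;
  sq0 : sQ;
  sF : {set sQ};
  sdelta : {set sQ * Sigma * (bool * 'I_sm) * option 'I_sm * sQ}
}.

Definition safa_upd (m : nat) (op : option 'I_m) (S : 'I_m -> nat -> bool)
  (d : nat) : 'I_m -> nat -> bool :=
  fun j e => if op == Some j then (e == d) || S j e else S j e.

Fixpoint safa_acc (Sigma : finType) (M : SAFA Sigma) (q : sQ M)
  (S : 'I_(sm M) -> nat -> bool) (w : dword Sigma) : Prop :=
  match w with
  | [::] => q \in sF M
  | (a, d) :: w' =>
      exists (alpha : bool * 'I_(sm M)) (op : option 'I_(sm M)) (q' : sQ M),
        [/\ (q, a, alpha, op, q') \in sdelta M,
            S alpha.2 d = alpha.1 &
            safa_acc q' (safa_upd op S d) w']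
  end.

Definition safa_lang (Sigma : finType) (M : SAFA Sigma) (w : dword Sigma) : Prop :=
  safa_acc (sq0 M) (fun _ _ => false) w.

(* f(d) = None encodes f(d) = bot. *)
Record CMA (Sigma : finType) := {
  cQ : finType;
  cdelta : {set cQ * Sigma * option cQ * cQ};
  cq0 : cQ;
  cFl : {set cQ};
  cFg : {set cQ};
  cFg_sub : cFg \subset cFl
}.

Fixpoint cma_acc (Sigma : finType) (M : CMA Sigma) (w0 : dword Sigma)
  (q : cQ M) (f : nat -> option (cQ M)) (w : dword Sigma) : Prop :=
  match w with
  | [::] => q \in cFg M /\
            (forall d, d \in map snd w0 -> exists p, f d = Some p /\ p \in cFl M)
  | (a, d) :: w' =>
      exists q' : cQ M,
        (q, a, f d, q') \in cdelta M /\
        cma_acc w0 q' (fun e => if e == d then Some q' else f e) w'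
  end.

Definition cma_lang (Sigma : finType) (M : CMA Sigma) (w : dword Sigma) : Prop :=
  cma_acc w (cq0 M) (fun _ => None) w.

(* Main.v *)
Require Import Defs.
From mathcomp Require Import all_boot zify.
Set Implicit Arguments. Unset Strict Implicit. Unset Printing Implicit Defensive.

Section Part1.
Variables (Sigma : finType) (M : SAFA Sigma).
Let m := sm M.
Definition cQ1 : finType := (sQ M * {set 'I_(sm M)})%type.
Definition mset (o : option cQ1) : {set 'I_(sm M)} :=
  if o is Some p then p.2 else set0.
Definition updB (op : option 'I_(sm M)) (X : {set 'I_(sm M)}) :=
  if op is Some j then j |: X else X.
Definition P1 (x : cQ1 * Sigma * option cQ1 * cQ1) : bool :=
  [exists alpha : bool * 'I_(sm M), exists op : option 'I_(sm M),
    [&& (x.1.1.1.1, x.1.1.2, alpha, op, x.2.1) \in sdelta M,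
        (alpha.2 \in mset x.1.2) == alpha.1 &
        x.2.2 == updB op (mset x.1.2)]].
Definition cma_of : CMA Sigma :=
  {| cQ := cQ1; cdelta := [set x | P1 x]; cq0 := (sq0 M, set0);
     cFl := setT; cFg := [set p : cQ1 | p.1 \in sF M]; cFg_sub := subsetT _ |}.

Lemma sim (w0 : dword Sigma) : forall w (q : sQ M) (B : {set 'I_(sm M)}) S
  (f : nat -> option (cQ cma_of)),
  (forall j e, S j e = (j \in mset (f e))) ->
  (forall d, d \in map snd w0 -> d \in map snd w \/ f d != None) ->
  (safa_acc q S w <-> cma_acc (M := cma_of) w0 ((q, B) : cQ cma_of) f w).
Proof.
elim=> [|[a d] w IH] q B S f HS Hf /=.
  rewrite inE /=; split; last by case.
  move=> Hq; split=> // d /Hf [] // Hfd.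
  by case: (f d) Hfd => // p _; exists p; rewrite inE.
have Hrel : forall op (p' : cQ cma_of), p'.2 = updB op (mset (f d)) ->
   forall j e, safa_upd op S d j e = (j \in mset (if e == d then Some p' else f e)).
  move=> op p' Hp' j e; rewrite /safa_upd; case: (e =P d) => [->|Hne].
    rewrite /= Hp' HS; case: op {Hp'} => [k|] /=; last by [].
    rewrite in_setU1 eq_sym; by case: (k =P j) => [->|].
  by case: (op == Some j); rewrite HS.
have Hf' : forall p', forall e, e \in map snd w0 -> e \in map snd w \/
    (if e == d then Some p' else f e) != None.
  move=> p' e /Hf; rewrite inE; case: (e =P d) => //= _; by right.
split.
  move=> [alpha [op [q' [Hd Hg Hacc]]]].
  exists (q', updB op (mset (f d))); split.
    rewrite inE /P1; apply/existsP; exists alpha; apply/existsP; exists op.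
    by rewrite /= Hd -HS Hg !eqxx.
  by apply (IH q' _ _ _ (Hrel op (q', _) erefl) (Hf' _)).
move=> [[q' B'] [Hd Hacc]].
move: Hd; rewrite inE /P1 => /existsP [alpha /existsP [op /and3P [Hd Hg /eqP HB]]].
exists alpha, op, q'; split => //; first by rewrite HS; apply/eqP.
apply (IH q' B' _ _ (Hrel op (q', B') HB) (Hf' _)); exact Hacc.
Qed.

Lemma part1 : exists N : CMA Sigma, forall w, safa_lang M w <-> cma_lang N w.
Proof.
exists cma_of => w; rewrite /safa_lang /cma_lang.
apply: sim => //= [j e|d Hd]; first by rewrite inE.
by left.
Qed.
End Part1.

Section Runs.
Variables (Sigma : finType) (M : SAFA Sigma).
Notation Q := (sQ M).
Notation Sets := ('I_(sm M) -> nat -> bool).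

Fixpoint run (q : Q) (S : Sets) (w : dword Sigma) (qs : seq Q) (q' : Q) (S' : Sets) : Prop :=
  match w, qs with
  | [::], [::] => q' = q /\ S' = S
  | (a, d) :: w', p :: qs' => exists alpha op,
      [/\ (q, a, alpha, op, p) \in sdelta M, S alpha.2 d = alpha.1 &
          run p (safa_upd op S d) w' qs' q' S']
  | _, _ => False
  end.

Lemma acc_run w : forall q S, safa_acc q S w <-> exists qs q' S', run q S w qs q' S' /\ q' \in sF M.
Proof.
elim: w => [|[a d] w IH] q S /=.
  split; first by move=> H; exists [::], q, S.
  by case=> [[|? ?] [q' [S' []]]] //= [-> _].
split.
  move=> [alpha [op [p [H1 H2 /IH [qs [q' [S' [H3 H4]]]]]]]].
  by exists (p :: qs), q', S'; split=> //; exists alpha, op.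
case=> [[|p qs] [q' [S' []]]] //= [alpha [op [H1 H2 H3]]] H4.
exists alpha, op, p; split=> //; apply/IH; by exists qs, q', S'.
Qed.

Lemma run_cat u : forall v q S qs1 q1 S1 qs2 q2 S2, run q S u qs1 q1 S1 -> run q1 S1 v qs2 q2 S2 ->
  run q S (u ++ v) (qs1 ++ qs2) q2 S2.
Proof.
elim: u => [|[a d] u IH] v q S [|p qs1] q1 S1 qs2 q2 S2 //=.
  by case=> -> ->.
move=> [alpha [op [H1 H2 H3]]] H4; exists alpha, op; split=> //; exact: IH H3 H4.
Qed.

Lemma run_split u : forall v q S qs q2 S2, run q S (u ++ v) qs q2 S2 ->
  exists qs1 qs2 q1 S1, run q S u qs1 q1 S1 /\ run q1 S1 v qs2 q2 S2.
Proof.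
elim: u => [|[a d] u IH] v q S qs q2 S2 /=.
  by move=> H; exists [::], qs, q, S.
case: qs => [|p qs] //= [alpha [op [H1 H2 /IH [qs1 [qs2 [q1 [S1 [H3 H4]]]]]]]].
exists (p :: qs1), qs2, q1, S1; split=> //; by exists alpha, op.
Qed.

Lemma run_size w : forall q S qs q' S', run q S w qs q' S' -> size qs = size w.
Proof.
elim: w => [|[a d] w IH] q S [|p qs] q' S' //= [alpha [op [_ _ /IH ->]]] //.
Qed.

Lemma run_to w : forall q S qs q' S' z, run q S w qs q' S' -> z \in qs ->
  exists w1 w2 qs1 qs2 S1, [/\ w = w1 ++ w2, w1 != [::], run q S w1 qs1 z S1 &
     run z S1 w2 qs2 q' S'].
Proof.
elim: w => [|[a d] w IH] q S [|p qs] q' S' z //= [alpha [op [H1 H2 H3]]].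
rewrite inE => /orP [/eqP Ez|Hz].
  subst z; exists [:: (a, d)], w, [:: p], qs, (safa_upd op S d); split=> //.
  by exists alpha, op; split.
have [w1 [w2 [qs1 [qs2 [S1 [E1 E2 E3 E4]]]]]] := IH _ _ _ _ _ _ H3 Hz.
exists ((a, d) :: w1), w2, (p :: qs1), qs2, S1; split=> //; first by rewrite E1.
by exists alpha, op; split.
Qed.

Lemma run_loop w : forall q S qs q' S', run q S w qs q' S' -> ~~ uniq (q :: qs) ->
  exists w1 w2 w3 qs1 qs2 qs3 p S1 S2, [/\ w = w1 ++ w2 ++ w3, w2 != [::],
     run q S w1 qs1 p S1, run p S1 w2 qs2 p S2 & run p S2 w3 qs3 q' S'].
Proof.
elim: w => [|[a d] w IH] q S [|p qs] q' S' //=.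
move=> Hr; rewrite negb_and negbK => /orP [Hq|Hu].
  have [w1 [w2 [qs1 [qs2 [S1 [E1 E2 E3 E4]]]]]] := run_to (Hr : run q S ((a, d) :: w) (p :: qs) q' S') Hq.
  exists [::], w1, w2, [::], qs1, qs2, q, S, S1; split=> //.
move: Hr => [alpha [op [H1 H2 H3]]].
have [w1 [w2 [w3 [qs1 [qs2 [qs3 [p' [S1 [S2 [E1 E2 E3 E4 E5]]]]]]]]]] := IH _ _ _ _ _ H3 Hu.
exists ((a, d) :: w1), w2, w3, (p :: qs1), qs2, qs3, p', S1, S2; split=> //; first by rewrite E1.
by exists alpha, op; split.
Qed.

Lemma run_agree (D : nat -> Prop) w : forall q S T qs q' S', run q S w qs q' S' ->
  (forall j e, D e -> S j e = T j e) -> (forall d, d \in map snd w -> D d) ->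
  exists T', run q T w qs q' T' /\ (forall j e, D e -> S' j e = T' j e).
Proof.
elim: w => [|[a d] w IH] q S T [|p qs] q' S' //=.
  by case=> -> -> HST _; exists T.
move=> [alpha [op [H1 H2 H3]]] HST HD.
have Dd : D d by apply: HD; rewrite inE eqxx.
have A1 : forall j e, D e -> safa_upd op S d j e = safa_upd op T d j e.
  by move=> j e De; rewrite /safa_upd !HST.
have A2 : forall e, e \in map snd w -> D e.
  by move=> e He; apply: HD; rewrite inE He orbT.
have [T' [R1 R2]] := IH _ _ (safa_upd op T d) _ _ _ H3 A1 A2.
exists T'; split=> //; exists alpha, op; split=> //; by rewrite -HST.
Qed.

Lemma run_frame w : forall q S qs q' S', run q S w qs q' S' ->
  forall j e, e \notin map snd w -> S' j e = S j e.
Proof.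
elim: w => [|[a d] w IH] q S [|p qs] q' S' //=.
  by case=> _ ->.
move=> [alpha [op [H1 H2 H3]]] j e; rewrite inE negb_or => /andP [Hne He].
rewrite (IH _ _ _ _ _ H3 j e He) /safa_upd (negbTE Hne); by case: ifP.
Qed.

Variable sg : nat -> nat.
Hypothesis sgK : forall e, sg (sg e) = e.
Definition rn (w : dword Sigma) : dword Sigma := map (fun x => (x.1, sg x.2)) w.

Lemma run_rn w : forall q S T qs q' S', run q S w qs q' S' ->
  (forall j e, T j e = S j (sg e)) ->
  exists T', run q T (rn w) qs q' T' /\ (forall j e, T' j e = S' j (sg e)).
Proof.
elim: w => [|[a d] w IH] q S T [|p qs] q' S' //=.
  by case=> -> -> HT; exists T.
move=> [alpha [op [H1 H2 H3]]] HT.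
have A : forall j e, safa_upd op T (sg d) j e = safa_upd op S d j (sg e).
  move=> j e; rewrite /safa_upd HT.
  have -> : (e == sg d) = (sg e == d).
    apply/eqP/eqP => [->|<-]; by rewrite sgK.
  done.
have [T' [R1 R2]] := IH _ _ (safa_upd op T (sg d)) _ _ _ H3 A.
exists T'; split=> //; exists alpha, op; split=> //; by rewrite HT sgK.
Qed.
End Runs.

Section Part2.
Variable Sigma : finType.
Definition cd2 : {set bool * Sigma * option bool * bool} := [set x | x.2 == isSome x.1.2].
Definition N2 : CMA Sigma :=
  {| cQ := bool; cdelta := cd2; cq0 := true; cFl := [set true]; cFg := [set true];
     cFg_sub := subxx _ |}.
Definition cnt d (w : dword Sigma) := count_mem d (map snd w).

Lemma accept2 (w0 : dword Sigma) : forall w (q : bool) (f : nat -> option bool),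
  {subset map snd w <= map snd w0} ->
  (forall d, f d = Some false -> d \in map snd w0) ->
  (q = false -> exists d, f d = Some false) ->
  (forall d, d \in map snd w0 -> 2 <= cnt d w \/ (1 <= cnt d w /\ f d != None) \/ f d = Some true) ->
  cma_acc (M := N2) w0 q f w.
Proof.
elim=> [|[a d] w IH] q f Hsub Hf Hq Hc /=.
  have Ht : forall d, d \in map snd w0 -> f d = Some true.
    move=> d /Hc; rewrite /cnt /=; by case=> [|[[]|]].
  split.
    case: q Hq => [|/(_ erefl) [d Hd]]; first by rewrite inE.
    by move: (Ht d (Hf d Hd)); rewrite Hd.
  by move=> d /Ht ->; exists true; rewrite inE.
exists (isSome (f d)); split; first by rewrite inE /=.
apply: IH.
- by move=> e He; apply: Hsub; rewrite inE He orbT.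
- move=> e; case: (e =P d) => [->|_]; last exact: Hf.
  by move=> _; apply: Hsub; rewrite inE eqxx.
- by move=> Hq'; exists d; rewrite eqxx Hq'.
move=> e /Hc; rewrite /cnt /=; case: (e =P d) => [->|Hne] /=.
  rewrite eqxx add1n ltnS.
  case=> [H2|[[H1 H2]|H3]].
  + by right; left; split.
  + by right; right; case: (f d) H2.
  + by right; right; rewrite H3.
have -> : (d == e) = false by apply/eqP => E; case: Hne.
by rewrite add0n.
Qed.

Lemma reject2 (w0 : dword Sigma) : forall w (q : bool) (f : nat -> option bool) d,
  d \in map snd w0 ->
  (cnt d w = 1 /\ f d = None) \/ (cnt d w = 0 /\ f d = Some false) ->
  ~ cma_acc (M := N2) w0 q f w.
Proof.
elim=> [|[a e] w IH] q f d Hd Hc /=.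
  case: Hc => [[]//|[_ Hfd]] [_ /(_ d Hd)]; rewrite Hfd.
  by case=> p [[<-]]; rewrite inE.
case=> q' []; rewrite inE /= => /eqP -> Hacc.
apply: (IH _ _ d Hd _ Hacc).
move: Hc; rewrite /cnt /=; case: (d =P e) => [->|Hne] /=.
  rewrite eqxx add1n; case=> [[[H1] H2]|[]] //.
  by right; rewrite H1 H2.
case: (e =P d) => [E|_]; first by case: Hne.
by rewrite add0n.
Qed.
End Part2.

Lemma part2 (Sigma : finType) (a0 : Sigma) (M : SAFA Sigma) :
  ~ (forall w : dword Sigma, safa_lang M w <-> cma_lang (N2 Sigma) w).
Proof.
move=> H.
set n := #|sQ M|.
pose x : dword Sigma := [seq (a0, i) | i <- iota 0 n].
have Hx : map snd x = iota 0 n by rewrite /x; elim: (iota 0 n) => //= ? ? ->.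
have Ui : uniq (iota 0 n) := iota_uniq 0 n.
have acc1 : cma_lang (N2 Sigma) (x ++ x).
  apply: (@accept2 Sigma (x ++ x) (x ++ x) true (fun _ => None)); [done|by move=> d []|by []|].
  move=> d Hd; left; rewrite /cnt map_cat count_cat Hx.
  have Hd' : d \in iota 0 n by move: Hd; rewrite map_cat mem_cat Hx orbb.
  by rewrite (count_uniq_mem _ Ui) Hd'.
move/H: acc1 => /acc_run [qs [qf [Sf [Hr Hf]]]].
have [qs1 [qs2 [qm [Sm [R1 R2]]]]] := run_split Hr.
have nu : ~~ uniq (sq0 M :: qs1).
  apply/negP => U; move: (card_uniqP U) (max_card (mem (sq0 M :: qs1))).
  by rewrite /= (run_size R1) size_map size_iota => -> ; rewrite ltnn.
have [w1 [w2 [w3 [qs1' [qs2' [qs3' [p [S1 [S2 [E1 E2 E3 E4 E5]]]]]]]]]] := run_loop R1 nu.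
pose sg (e : nat) := if e < n then e + n else if e < n + n then e - n else e.
have sgK : forall e, sg (sg e) = e.
  move=> e; rewrite /sg; case: (ltnP e n) => H1.
    have -> : (e + n < n) = false by lia.
    have -> : (e + n < n + n) = true by lia.
    lia.
  case: (ltnP e (n + n)) => H2.
    have -> : (e - n < n) = true by lia.
    lia.
  have -> : (e < n) = false by lia.
  by have -> : (e < n + n) = false by lia.
have Hdat : map snd w1 ++ map snd w2 ++ map snd w3 = iota 0 n by rewrite -Hx E1 !map_cat.
have Udat : uniq (map snd w1 ++ map snd w2 ++ map snd w3) by rewrite Hdat.
have lt : forall d, d \in map snd w1 ++ map snd w2 ++ map snd w3 -> d < n.
  by move=> d; rewrite Hdat mem_iota.
have lt1 : forall d, d \in map snd w1 -> d < n.
  by move=> d Hd; apply: lt; rewrite mem_cat Hd.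
have lt2 : forall d, d \in map snd w2 -> d < n.
  by move=> d Hd; apply: lt; rewrite !mem_cat Hd orbT.
have lt3 : forall d, d \in map snd w3 -> d < n.
  by move=> d Hd; apply: lt; rewrite !mem_cat Hd !orbT.
have ltx : forall d, d \in map snd x -> d < n by move=> d; rewrite Hx mem_iota.
have disj12 : forall d, d \in map snd w2 -> d \notin map snd w1.
  move: Udat; rewrite cat_uniq => /and3P [_ /hasPn Hn _] d Hd.
  by apply: Hn; rewrite mem_cat Hd.
have sgn : forall d, d < n -> sg d = d + n by move=> d Hd; rewrite /sg Hd.
have snd_rn : map snd (rn sg w2) = map sg (map snd w2).
  by rewrite /rn -!map_comp.
have rnD : forall e, e \in map snd (rn sg w2) -> exists2 d, d \in map snd w2 & e = d + n.
  move=> e; rewrite snd_rn => /mapP [d Hd ->]; exists d => //; exact: sgn (lt2 d Hd).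
have S1f : forall j e, e \notin map snd w1 -> S1 j e = false.
  by move=> j e He; rewrite (run_frame E3 j He).
have [T' [RA _]] := run_rn sgK (T := fun j e => S1 j (sg e)) E4 (fun _ _ => erefl).
have HB : forall e, e \in map snd (rn sg w2) -> forall j, S1 j (sg e) = S1 j e.
  move=> e /rnD [d Hd ->] j.
  rewrite -(sgn _ (lt2 d Hd)) sgK S1f ?(disj12 _ Hd) // S1f //.
  apply/negP => /lt1; rewrite (sgn _ (lt2 d Hd)); lia.
have [Z [RB _]] := run_agree (D := fun e => forall j, S1 j (sg e) = S1 j e) RA
   (fun j e De => De j) HB.
have ZS1 : forall j e, e \notin map snd (rn sg w2) -> S1 j e = Z j e.
  by move=> j e He; rewrite (run_frame RB j He).
have notrn : forall d, d < n -> d \notin map snd (rn sg w2).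
  by move=> d Hd; apply/negP => /rnD [d' _ E]; lia.
have [Z2 [RC HC]] := run_agree (D := fun e => e \notin map snd (rn sg w2)) E4
   (fun j e De => ZS1 j e De) (fun d Hd => notrn d (lt2 d Hd)).
have RD0 := run_cat E5 R2.
have HD : forall d, d \in map snd (w3 ++ x) -> d \notin map snd (rn sg w2).
  move=> d; rewrite map_cat mem_cat => /orP [/lt3|/ltx]; exact: notrn.
have [Z3 [RD _]] := run_agree (D := fun e => e \notin map snd (rn sg w2)) RD0 HC HD.
have Rall := run_cat E3 (run_cat RB (run_cat RC RD)).
have Hacc : safa_lang M (w1 ++ rn sg w2 ++ w2 ++ w3 ++ x).
  by apply/acc_run; exists (qs1' ++ qs2' ++ qs2' ++ qs3' ++ qs2), qf, Z3.
move/H: Hacc.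
case Ew2: w2 E2 => [//|[a d] w2'] _.
have Hd2 : d \in map snd w2 by rewrite Ew2 inE eqxx.
have Hd := lt2 d Hd2.
apply: (reject2 (d := d + n)).
  by rewrite -Ew2 !map_cat !mem_cat snd_rn -(sgn _ Hd) (map_f sg Hd2) !orbT.
left; split=> //.
rewrite -Ew2 /cnt !map_cat !count_cat snd_rn.
have C0 : forall s, (forall e, e \in s -> e < n) -> count_mem (d + n) s = 0.
  move=> s Hs; apply/count_memPn/negP => /Hs; lia.
rewrite (C0 (map snd w1) lt1) (C0 (map snd w2) lt2) (C0 (map snd w3) lt3) (C0 (map snd x) ltx).
have U2 : uniq (map sg (map snd w2)).
  rewrite (map_inj_uniq (can_inj sgK)).
  by move: Udat; rewrite !cat_uniq => /and3P [_ _ /andP [] ].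
by rewrite (count_uniq_mem _ U2) -(sgn _ Hd) (map_f sg Hd2).
Qed.

Theorem corollary2 (Sigma : finType) :
  (forall M : SAFA Sigma, exists N : CMA Sigma,
      forall w : dword Sigma, safa_lang M w <-> cma_lang N w) /\
  (forall a0 : Sigma, exists N : CMA Sigma,
      forall M : SAFA Sigma, ~ (forall w : dword Sigma, safa_lang M w <-> cma_lang N w)).
Proof.
split; first exact: part1.
move=> a0; exists (N2 Sigma) => M; exact: part2.
Qed.
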